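(* Let $n$ be an even positive integer, let $0<\epsilon\le \frac1{18}$, and let $f_\epsilon:\mathbb{R}^n\to\mathbb{R}$ be \[ f_\epsilon(\mathbf{x})=\frac{1-\epsilon}{2}\sum_{i=1}^n x_i^2+\frac{\epsilon}{2}\Big(\sum_{i=1}^n x_i\Big)^2 , \] whose minimum point is $\mathbf{x}^*=\mathbf{0}$. Let $\Gamma\ge 1$. Let $\mathbf{x}^0$ be the point whose even-indexed coordinates equal $+1$ and whose odd-indexed coordinates equal $-1$. Run sequential stochastic coordinate descent for $t$ steps: at each step $s=1,\dots,t$ a coordinate $j\in\{1,\dots,n\}$ is chosen uniformly at random, independently of all previous choices, and one sets $x^s_j=x^{s-1}_j-\frac{1}{\Gamma}\nabla_j f_\epsilon(\mathbf{x}^{s-1})$ and $x^s_k=x^{s-1}_k$ for $k\ne j$. Then \[ \mathbb{E}\big[f_\epsilon(\mathbf{x}^t)-f_\epsilon(\mathbf{x}^* )\big]\ \ge\ \Big(1-\frac{2}{n}\cdot\frac{1-\epsilon}{\Gamma}\Big)^{t}\big(f_\epsilon(\mathbf{x}^0)-f_\epsilon(\mathbf{x}^* )\big). \]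
   Context: Here $\nabla_j f_\epsilon(\mathbf{x})=(1-\epsilon)x_j+\epsilon\sum_{i=1}^n x_i$. The parameter $\Gamma$ is the step-size parameter, required to satisfy $\Gamma\ge L_{\max}$, where $L_{\max}=1$ is the largest coordinate-wise Lipschitz constant of $\nabla_j f_\epsilon$ in $x_j$. *)

(* Defs.v *)
(* R : realType. Points of R^n are functions 'I_n -> R
   (coordinate i : 'I_n is the paper's coordinate i+1). *)
From mathcomp Require Import all_boot all_order all_algebra.
From mathcomp Require Import reals.
Set Implicit Arguments. Unset Strict Implicit. Unset Printing Implicit Defensive.
Import Order.TTheory GRing.Theory Num.Theory.
Local Open Scope ring_scope.

Section Defs.
Variables (R : realType) (n : nat).

Definition f_eps (eps : R) (x : 'I_n -> R) : R :=
  (1 - eps) / 2 * (\sum_(i < n) x i ^+ 2) + eps / 2 * (\sum_(i < n) x i) ^+ 2.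

Definition grad_eps (eps : R) (x : 'I_n -> R) (j : 'I_n) : R :=
  (1 - eps) * x j + eps * \sum_(i < n) x i.

Definition cd_step (eps Gamma : R) (x : 'I_n -> R) (j : 'I_n) : 'I_n -> R :=
  fun k => if k == j then x k - Gamma^-1 * grad_eps eps x j else x k.

Definition cd_run (eps Gamma : R) (x0 : 'I_n -> R) (js : seq 'I_n) : 'I_n -> R :=
  foldl (cd_step eps Gamma) x0 js.

(* x^0: paper's coordinate i+1 is +1 if i+1 is even, -1 if odd *)
Definition x_init : 'I_n -> R := fun i => if odd i then 1 else -1.

(* E[f_eps(x^t) - f_eps(0)] for t independent uniform choices in {1..n}:
   the average over all n^t choice sequences. *)
Definition expected_gap (eps Gamma : R) (t : nat) : R :=
  (\sum_(js : t.-tuple 'I_n)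
      (f_eps eps (cd_run eps Gamma x_init js) - f_eps eps (fun _ => 0)))
  / (n%:R ^+ t).

End Defs.

(* Main.v *)
Require Import Defs.
From mathcomp Require Import all_boot all_order all_algebra.
From mathcomp Require Import reals.
From mathcomp Require Import ring lra.
Import Order.TTheory GRing.Theory Num.Theory.
Local Open Scope ring_scope.

Section Proof.
Variables (R : realType) (n : nat).

Definition hh (x : 'I_n -> R) : R :=
  \sum_(i < n) x i ^+ 2 - (\sum_(i < n) x i) ^+ 2.

Lemma sum_if (j : 'I_n) (A B : 'I_n -> R) :
  \sum_(i < n) (if i == j then A i else B i) = \sum_(i < n) B i + (A j - B j).
Proof.
rewrite (bigD1 j) //= eqxx [in RHS](bigD1 j) //=.
rewrite (eq_bigr B); last by move=> i /negbTE ->.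
ring.
Qed.

Lemma hh_step (eps Gamma : R) x (j : 'I_n) :
  hh (cd_step eps Gamma x j) =
  hh x + 2 * (- Gamma^-1 * grad_eps eps x j) * (x j - \sum_(i < n) x i).
Proof.
rewrite /hh /cd_step.
have -> : \sum_(i < n) (if i == j then x i - Gamma^-1 * grad_eps eps x j else x i) ^+ 2
  = \sum_(i < n) (if i == j then (x i - Gamma^-1 * grad_eps eps x j) ^+ 2 else x i ^+ 2).
  by apply: eq_bigr => i _; case: (i == j).
rewrite !sum_if.
ring.
Qed.

Lemma hh_avg (eps Gamma : R) x : (0 < n)%N -> 0 <= eps -> 0 < Gamma ->
  (n%:R - 2 * Gamma^-1 * (1 - eps)) * hh x <=
  \sum_(j < n) hh (cd_step eps Gamma x j).
Proof.
move=> hn he hG.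
under eq_bigr do rewrite hh_step.
rewrite big_split /= sumr_const card_ord.
set S := \sum_(i < n) x i.
set Q := \sum_(i < n) x i ^+ 2.
have -> : \sum_(i < n) 2 * (- Gamma^-1 * grad_eps eps x i) * (x i - S)
   = \sum_(i < n) ((- 2 * Gamma^-1 * (1 - eps)) * x i ^+ 2
       + (2 * Gamma^-1 * (1 - eps) - 2 * Gamma^-1 * eps) * S * x i
       + 2 * Gamma^-1 * eps * S ^+ 2).
  by apply: eq_bigr => i _; rewrite /grad_eps -/S; ring.
rewrite !big_split /= -!mulr_sumr sumr_const card_ord -/Q -/S.
rewrite /hh -/Q -/S.
rewrite -[(Q - S ^+ 2) *+ n]mulr_natr -[S *+ n]mulr_natr.
set G := Gamma^-1.
have hG' : 0 <= G by rewrite invr_ge0 ltW.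
have hS : 0 <= S ^+ 2 by apply: sqr_ge0.
have h2 : 0 <= 2 * G * eps by rewrite !mulr_ge0 ?ler0n.
rewrite -subr_ge0.
set L := (X in 0 <= X).
have -> : L = 2 * G * eps * S ^+ 2 * (n%:R - 1) by rewrite /L; ring.
apply: mulr_ge0; first by rewrite mulr_ge0.
by rewrite subr_ge0 ler1n.
Qed.

Lemma hh_run (eps Gamma : R) t : (0 < n)%N -> 0 <= eps -> 0 < Gamma ->
  0 <= n%:R - 2 * Gamma^-1 * (1 - eps) -> forall x,
  (n%:R - 2 * Gamma^-1 * (1 - eps)) ^+ t * hh x <=
  \sum_(js : t.-tuple 'I_n) hh (cd_run eps Gamma x js).
Proof.
move=> hn he hG hc; elim: t => [|t IH] x.
  rewrite (big_pred1 [tuple]) => [|js]; first by rewrite expr0 mul1r.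
  by rewrite /= [js]tuple0; apply/eqP.
rewrite (reindex (fun p : 'I_n * t.-tuple 'I_n => [tuple of p.1 :: p.2])) /=; last first.
  exists (fun js => (thead js, [tuple of behead js])) => [[j js] _ | js _] /=.
    by rewrite theadE; congr pair; apply: val_inj.
  by rewrite [RHS]tuple_eta.
rewrite -(pair_big xpredT xpredT (fun j (js : t.-tuple 'I_n) =>
   hh (cd_run eps Gamma x [tuple of j :: js]))) /=.
apply: (@le_trans _ _ (\sum_(j < n) (n%:R - 2 * Gamma^-1 * (1 - eps)) ^+ t
   * hh (cd_step eps Gamma x j))).
  rewrite -mulr_sumr exprSr -mulrA ler_wpM2l ?exprn_ge0 //.
  exact: hh_avg.
by apply: ler_sum => j _; apply: IH.
Qed.

End Proof.
Arguments hh {R n}.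
Lemma sum_alt (R : realType) (m : nat) : ~~ odd m ->
  \sum_(i < m) (if odd i then 1 else -1 : R) = 0.
Proof.
move=> hm; rewrite -[m]odd_double_half (negbTE hm) add0n.
elim: (m./2) => [|k IH]; first by rewrite big_ord0.
rewrite doubleS !big_ord_recr /= IH.
by rewrite odd_double /= add0r addrC subrr.
Qed.

Lemma sum_alt2 (R : realType) (m : nat) :
  \sum_(i < m) (if odd i then 1 else -1 : R) ^+ 2 = m%:R.
Proof.
rewrite (eq_bigr (fun _ => 1)); first by rewrite sumr_const card_ord.
by move=> i _; case: (odd i); rewrite ?expr1n ?sqrrN ?expr1n.
Qed.

Theorem theorem2 (R : realType) (n : nat) (eps Gamma : R) (t : nat)
  (hn_pos : (0 < n)%N) (hn_even : ~~ odd n)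
  (heps0 : 0 < eps) (heps1 : eps <= 1 / 18) (hGamma : 1 <= Gamma) :
  expected_gap n eps Gamma t >=
    (1 - 2 / n%:R * ((1 - eps) / Gamma)) ^+ t *
      (f_eps eps (@x_init R n) - f_eps eps (fun _ : 'I_n => 0)).
Proof.
have f0 : f_eps eps (fun _ : 'I_n => 0) = 0.
  rewrite /f_eps !big1 // => [|i _]; last by rewrite expr0n.
  by rewrite expr0n /=; ring.
have fge : forall y : 'I_n -> R, (1 - eps) / 2 * hh y <= f_eps eps y.
  move=> y; rewrite /f_eps /hh.
  have := sqr_ge0 (\sum_(i < n) y i); lra.
have hx0 : hh (@x_init R n) = n%:R.
  by rewrite /hh /x_init sum_alt // sum_alt2 expr0n /= subr0.
have fx0 : f_eps eps (@x_init R n) = (1 - eps) / 2 * n%:R.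
  by rewrite /f_eps /x_init sum_alt // sum_alt2 expr0n /= mulr0 addr0.
have hG : 0 < Gamma by lra.
set G := Gamma^-1.
have hG0 : 0 < G by rewrite invr_gt0.
have hG1 : G <= 1 by rewrite /G invr_le1 // unitf_gt0.
have hn2 : (2 <= n)%N by case: n hn_pos hn_even {f0 fge hx0 fx0} => [|[|k]].
have hn2' : 2 <= n%:R :> R by rewrite (ler_nat R 2 n).
have hc : 0 <= n%:R - 2 * G * (1 - eps) by nra.
have key := @hh_run R n eps Gamma t hn_pos (ltW heps0) hG hc (@x_init R n).
have hnt : 0 < n%:R ^+ t :> R by rewrite exprn_gt0 // ltr0n.
rewrite /expected_gap f0 subr0 ler_pdivlMr //.
under eq_bigr do rewrite subr0.
have -> : (1 - 2 / n%:R * ((1 - eps) / Gamma)) ^+ t * f_eps eps (@x_init R n) * n%:R ^+ t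
   = (1 - eps) / 2 * ((n%:R - 2 * G * (1 - eps)) ^+ t * hh (@x_init R n)).
  have hn0 : n%:R != 0 :> R by rewrite pnatr_eq0 -lt0n.
  have E : (1 - 2 / n%:R * ((1 - eps) / Gamma)) * n%:R = n%:R - 2 * G * (1 - eps).
    by rewrite /G; field; rewrite hn0 andbT lt0r_neq0.
  by rewrite fx0 hx0 mulrAC -exprMn E; ring.
apply: (le_trans (y := (1 - eps) / 2 * \sum_(js : t.-tuple 'I_n) hh (cd_run eps Gamma (@x_init R n) js))).
  by rewrite ler_wpM2l // divr_ge0 //; lra.
by rewrite mulr_sumr; apply: ler_sum => js _; apply: fge.
Qed.
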